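(* Let $\lambda$ be a real number with $\lambda\neq 0$ and $\lambda\ne -1$, and let $x$ be a real number with $0<|x|<1/|\lambda|$. Then \[ e_{\lambda}(x,\ 1|2)=\frac{1}{1+\lambda}\cdot\frac{1}{x}\int_{0}^{x}\frac{1}{t}\big(e_{\lambda}(t)-1\big)\,dt+\frac{1}{x}\,\frac{\lambda}{(1+\lambda)^{2}}\big(e_{\lambda}(x)-1\big)+\Big(\frac{\lambda}{1+\lambda}\Big)^{2}e_{\lambda}(x). \]
   Context: For nonzero real $\lambda$: $(1)_{0,\lambda}=1$, $(1)_{n,\lambda}=1(1-\lambda)(1-2\lambda)\cdots(1-(n-1)\lambda)$ for $n\ge1$. The degenerate exponential is $e_\lambda(t)=(1+\lambda t)^{1/\lambda}=\sum_{n\ge0}(1)_{n,\lambda}t^n/n!$ for $|\lambda t|<1$. The degenerate polyexponential function is $e_{\lambda}(x,\ \delta|k)=\sum_{n=0}^{\infty}\frac{(1)_{n,\lambda}}{n!\,(n+\delta)^{k}}x^{n}$; in particular $e_\lambda(x,1|2)=\sum_{n\ge0}\frac{(1)_{n,\lambda}}{n!(n+1)^2}x^n$. The integrand $(e_\lambda(t)-1)/t$ is extended continuously at $t=0$. *)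

(* Defs.v *)
From Stdlib Require Import Reals.
From Coquelicot Require Import Coquelicot.
Open Scope R_scope.

Fixpoint deg_fall (lam : R) (n : nat) : R :=
  match n with
  | O => 1
  | S m => deg_fall lam m * (1 - INR m * lam)
  end.

(* degenerate exponential e_lambda(t) = (1 + lambda t)^(1/lambda)
   (used for |lambda t| < 1, where 1 + lambda t > 0) *)
Definition deg_exp (lam t : R) : R := Rpower (1 + lam * t) (1 / lam).

Definition deg_polyexp (lam x delta : R) (k : nat) : R :=
  Series (fun n => deg_fall lam n / (INR (Factorial.fact n) * (INR n + delta) ^ k) * x ^ n).

(* integrand (e_lambda(t) - 1)/t, extended continuously at t = 0 by its limit 1 *)
Definition deg_integrand (lam t : R) : R :=
  if Req_EM_T t 0 then 1 else (deg_exp lam t - 1) / t.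

(* Main.v *)
Require Import Defs.
From Stdlib Require Import Reals Lra Lia.
From Coquelicot Require Import Coquelicot.
Open Scope R_scope.

Definition ca (lam : R) (n : nat) : R := deg_fall lam n / INR (Factorial.fact n).

Lemma fact_pos n : 0 < INR (Factorial.fact n).
Proof. apply lt_0_INR. apply Factorial.lt_O_fact. Qed.

Lemma ca_S lam n : ca lam (S n) = ca lam n * (1 - INR n * lam) / INR (S n).
Proof.
  unfold ca. simpl deg_fall.
  change (Factorial.fact (S n)) with (S n * Factorial.fact n)%nat.
  rewrite mult_INR. pose proof (fact_pos n). pose proof (lt_0_INR (S n) ltac:(lia)).
  intros. field. lra.
Qed.

Lemma ca_0 lam : ca lam 0 = 1.
Proof. unfold ca. simpl. field. Qed.

Lemma sum_ge_term (u : nat -> R) : (forall n, 0 <= u n) ->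
  forall N n, (n <= N)%nat -> u n <= sum_f_R0 u N.
Proof.
  intros Hu N. induction N as [|N IH]; intros n Hn.
  - replace n with 0%nat by lia. simpl. lra.
  - simpl. destruct (Nat.eq_dec n (S N)) as [->|Hne].
    + pose proof ((cond_pos_sum u N Hu)). lra.
    + pose proof (IH n ltac:(lia)). pose proof (Hu (S N)). lra.
Qed.

Lemma ca_bounded lam r : 0 <= r -> r * Rabs lam < 1 ->
  exists M, forall n, Rabs (ca lam n * r ^ n) <= M.
Proof.
  intros Hr Hrl.
  set (u := fun n => Rabs (ca lam n * r ^ n)).
  assert (Hu : forall n, 0 <= u n) by (intros; apply Rabs_pos).
  destruct (INR_unbounded (r / (1 - r * Rabs lam))) as [N HN].
  assert (Hdec : forall n, (N <= n)%nat -> u (S n) <= u n).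
  { intros n Hn. unfold u. rewrite ca_S.
    assert (Hn' : INR N <= INR n) by (apply le_INR; exact Hn).
    assert (HS : 0 < INR (S n)) by (apply lt_0_INR; lia).
    replace (ca lam n * (1 - INR n * lam) / INR (S n) * r ^ S n)
      with ((ca lam n * r ^ n) * ((1 - INR n * lam) * r / INR (S n))) by (change (r ^ S n) with (r * r ^ n); field; lra).
    rewrite Rabs_mult.
    rewrite <- (Rmult_1_r (Rabs (ca lam n * r ^ n))) at 2.
    apply Rmult_le_compat_l; [apply Rabs_pos|].
    rewrite Rabs_div; [|lra]. rewrite (Rabs_right (INR (S n))) by lra.
    apply (Rmult_le_reg_r (INR (S n))); [lra|].
    unfold Rdiv. rewrite Rmult_assoc, Rinv_l; [|lra].
    rewrite Rmult_1_r, Rmult_1_l, Rabs_mult, (Rabs_right r) by lra.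
    rewrite S_INR.
    assert (H1 : Rabs (1 - INR n * lam) <= 1 + INR n * Rabs lam).
    { eapply Rle_trans; [apply Rabs_triang|]. rewrite Rabs_Ropp, Rabs_mult, Rabs_R1.
      rewrite (Rabs_right (INR n)); [lra|]. apply Rle_ge, pos_INR. }
    assert (Hpos : 0 < 1 - r * Rabs lam) by lra.
    assert (H2 : r <= INR N * (1 - r * Rabs lam)).
    { apply Rlt_le. unfold Rgt in HN. apply (Rmult_lt_compat_r (1 - r * Rabs lam)) in HN; [|lra].
      unfold Rdiv in HN. rewrite Rmult_assoc, Rinv_l in HN; lra. }
    assert (H3 : INR N * (1 - r * Rabs lam) <= INR n * (1 - r * Rabs lam)
     ) by (apply Rmult_le_compat_r; lra).
    pose proof (Rabs_pos lam).
    apply Rle_trans with ((1 + INR n * Rabs lam) * r).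
    - apply Rmult_le_compat_r; lra.
    - nra. }
  exists (sum_f_R0 u N). intros n.
  change (u n <= sum_f_R0 u N).
  destruct (Nat.le_gt_cases n N) as [H|H].
  - apply sum_ge_term; auto.
  - apply Rle_trans with (u N); [|apply sum_ge_term; auto].
    replace n with (N + (n - N))%nat by lia.
    generalize (n - N)%nat. intros k. induction k as [|k IH].
    + rewrite Nat.add_0_r. lra.
    + rewrite Nat.add_succ_r. eapply Rle_trans; [apply Hdec; lia|]. exact IH.
Qed.

Lemma ca_rad lam x : lam <> 0 -> Rabs x < 1 / Rabs lam ->
  Rbar_lt (Rabs x) (CV_radius (ca lam)).
Proof.
  intros Hl Hx.
  assert (Hlp : 0 < Rabs lam) by (apply Rabs_pos_lt; exact Hl).
  set (r := (Rabs x + 1 / Rabs lam) / 2).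
  assert (Hxl : Rabs x * Rabs lam < 1).
  { apply (Rmult_lt_compat_r (Rabs lam)) in Hx; auto.
    unfold Rdiv in Hx. rewrite Rmult_1_l, Rinv_l in Hx; lra. }
  assert (Hrl : r * Rabs lam < 1).
  { unfold r. replace ((Rabs x + 1 / Rabs lam) / 2 * Rabs lam) with ((Rabs x * Rabs lam + 1)/2) by (field; lra). lra. }
  assert (Hle : Rbar_le r (CV_radius (ca lam))).
  { destruct (CV_radius_bounded (ca lam)) as [Hub _]. apply Hub.
    apply ca_bounded; auto. unfold r. pose proof (Rabs_pos x).
    assert (0 < 1 / Rabs lam) by (apply Rdiv_lt_0_compat; lra). lra. }
  eapply Rbar_lt_le_trans; [|exact Hle]. simpl. unfold r. lra.
Qed.

Lemma incr_der lam n : PS_incr_1 (PS_derive (ca lam)) n = INR n * ca lam n.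
Proof. destruct n; simpl. unfold zero; simpl; ring. unfold PS_derive. reflexivity. Qed.

Lemma der_eq lam n : PS_derive (ca lam) n = ca lam n + (-lam) * (INR n * ca lam n).
Proof.
  unfold PS_derive. rewrite ca_S. assert (0 < INR (S n)) by (apply lt_0_INR; lia).
  field. lra.
Qed.

Lemma pos_arg lam t : Rabs t < 1 / Rabs lam -> lam <> 0 -> 0 < 1 + lam * t.
Proof.
  intros Ht Hl.
  assert (Hlp : 0 < Rabs lam) by (apply Rabs_pos_lt; exact Hl).
  assert (Rabs (lam * t) < 1).
  { rewrite Rabs_mult. apply (Rmult_lt_compat_l (Rabs lam)) in Ht; auto.
    replace (Rabs lam * (1 / Rabs lam)) with 1 in Ht by (field; lra). lra. }
  apply Rabs_def2 in H. lra.
Qed.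

Lemma gprime lam t : lam <> 0 -> Rabs t < 1 / Rabs lam ->
  PSeries (PS_derive (ca lam)) t * (1 + lam * t) = PSeries (ca lam) t.
Proof.
  intros Hl Ht.
  pose proof (ca_rad lam t Hl Ht) as Hr.
  assert (Heq : PSeries (PS_derive (ca lam)) t =
    PSeries (PS_plus (ca lam) (PS_scal (-lam) (PS_incr_1 (PS_derive (ca lam))))) t).
  { apply PSeries_ext. intros n. unfold PS_plus, PS_scal. rewrite incr_der, der_eq. reflexivity. }
  rewrite PSeries_plus in Heq.
  - rewrite PSeries_scal, PSeries_incr_1 in Heq. simpl in Heq. unfold mult in Heq; simpl in Heq.
    lra.
  - apply CV_radius_inside; auto.
  - apply ex_pseries_scal. unfold mult; simpl; ring.
    apply CV_radius_inside. rewrite CV_radius_incr_1, CV_radius_derive. auto.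
Qed.

Definition Fm (lam t : R) := exp (-(1/lam) * ln (1 + lam * t)).

Lemma Fm_exp lam t : 0 < 1 + lam * t -> deg_exp lam t * Fm lam t = 1.
Proof.
  intros H. unfold deg_exp, Fm, Rpower. rewrite <- exp_plus.
  replace (1 / lam * ln (1 + lam * t) + - (1 / lam) * ln (1 + lam * t)) with 0 by ring.
  apply exp_0.
Qed.

Lemma h_der lam c : lam <> 0 -> Rabs c < 1 / Rabs lam ->
  is_derive (fun t => PSeries (ca lam) t * Fm lam t) c 0.
Proof.
  intros Hl Hc.
  pose proof (pos_arg lam c Hc Hl) as Hp.
  pose proof (is_derive_PSeries _ _ (ca_rad lam c Hl Hc)) as Hg.
  assert (HF : is_derive (Fm lam) c (Fm lam c * (-(1/lam) * (lam / (1 + lam * c))))).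
  { unfold Fm. auto_derive. lra. field. split; lra. }
  pose proof (is_derive_mult _ _ _ _ _ Hg HF) as H.
  replace 0 with (plus (mult (PSeries (PS_derive (ca lam)) c) (Fm lam c))
      (mult (PSeries (ca lam) c) (Fm lam c * (- (1 / lam) * (lam / (1 + lam * c)))))).
  - apply H. intros; unfold mult; simpl; ring.
  - unfold plus, mult; simpl. rewrite <- (gprime lam c Hl Hc). field. split; lra.
Qed.

Lemma exp_series lam x : lam <> 0 -> Rabs x < 1 / Rabs lam ->
  deg_exp lam x = PSeries (ca lam) x.
Proof.
  intros Hl Hx.
  destruct (MVT_cor4 (fun t => PSeries (ca lam) t * Fm lam t) (fun _ => 0) 0 (Rabs x))
    with (b := x) as [c [Hc _]].
  - intros c Hc. apply h_der; auto. rewrite Rminus_0_r in Hc. eapply Rle_lt_trans; eauto.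
  - rewrite Rminus_0_r. lra.
  - rewrite PSeries_0, ca_0 in Hc. unfold Fm in Hc.
    rewrite Rmult_0_r, Rplus_0_r, ln_1, Rmult_0_r, exp_0 in Hc.
    pose proof (Fm_exp lam x (pos_arg lam x Hx Hl)).
    fold (Fm lam x) in Hc. assert (PSeries (ca lam) x * Fm lam x = 1) by lra.
    transitivity (deg_exp lam x * (PSeries (ca lam) x * Fm lam x)). rewrite H0; ring.
    transitivity (PSeries (ca lam) x * (deg_exp lam x * Fm lam x)). ring. rewrite H; ring.
Qed.

Lemma integrand_eq lam t : lam <> 0 -> Rabs t < 1 / Rabs lam ->
  deg_integrand lam t = PSeries (PS_decr_1 (ca lam)) t.
Proof.
  intros Hl Ht. unfold deg_integrand. destruct (Req_EM_T t 0) as [->|Hn].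
  - rewrite PSeries_0. unfold PS_decr_1. rewrite ca_S, ca_0. simpl. field.
  - rewrite (exp_series lam t Hl Ht).
    rewrite (PSeries_decr_1 (ca lam) t) by (apply CV_radius_inside, ca_rad; auto).
    rewrite ca_0. field. exact Hn.
Qed.

Lemma rad_d lam x : lam <> 0 -> Rabs x < 1 / Rabs lam ->
  Rbar_lt (Rabs x) (CV_radius (PS_decr_1 (ca lam))).
Proof. intros. rewrite CV_radius_decr_1. apply ca_rad; auto. Qed.

Lemma int_eq lam x : lam <> 0 -> Rabs x < 1 / Rabs lam ->
  RInt (deg_integrand lam) 0 x = PSeries (PS_Int (PS_decr_1 (ca lam))) x.
Proof.
  intros Hl Hx.
  rewrite <- RInt_PSeries by (apply rad_d; auto).
  apply RInt_ext. intros t Ht. apply integrand_eq; auto.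
  apply Rle_lt_trans with (Rabs x); auto.
  unfold Rmin, Rmax in Ht. destruct (Rle_dec 0 x).
  - rewrite (Rabs_right x) by lra. apply Rlt_le, Rabs_def1; lra.
  - rewrite (Rabs_left x) by lra. apply Rlt_le, Rabs_def1; lra.
Qed.

Theorem lemma2 (lam x : R) (Hl0 : lam <> 0) (Hl1 : lam <> -1)
  (Hx0 : 0 < Rabs x) (Hx1 : Rabs x < 1 / Rabs lam) :
  deg_polyexp lam x 1 2 =
    1 / (1 + lam) * (1 / x) * RInt (deg_integrand lam) 0 x
    + 1 / x * (lam / (1 + lam) ^ 2) * (deg_exp lam x - 1)
    + (lam / (1 + lam)) ^ 2 * deg_exp lam x.
Proof.
  assert (Hx : x <> 0).
  { intros ->. rewrite Rabs_R0 in Hx0. lra. }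
  assert (Hl : 1 + lam <> 0) by lra.
  set (d := PS_decr_1 (ca lam)).
  set (e := PS_decr_1 (PS_Int d)).
  assert (H1 : 1 / x * RInt (deg_integrand lam) 0 x = PSeries e x).
  { rewrite int_eq by auto. unfold e, d.
    rewrite (PSeries_decr_1_aux (PS_Int (PS_decr_1 (ca lam))) x) by reflexivity. field. exact Hx. }
  assert (H2 : 1 / x * (deg_exp lam x - 1) = PSeries d x).
  { unfold d. rewrite <- (integrand_eq lam x Hl0 Hx1). unfold deg_integrand.
    destruct (Req_EM_T x 0); [contradiction|]. field. exact Hx. }
  rewrite exp_series by auto.
  replace (1 / (1 + lam) * (1 / x) * RInt (deg_integrand lam) 0 x)
    with (1 / (1 + lam) * (1 / x * RInt (deg_integrand lam) 0 x)) by ring.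
  rewrite <- exp_series by auto.
  replace (1 / x * (lam / (1 + lam) ^ 2) * (deg_exp lam x - 1))
    with (lam / (1 + lam) ^ 2 * (1 / x * (deg_exp lam x - 1))) by ring.
  rewrite H1, H2, exp_series by auto.
  assert (He : ex_pseries e x).
  { apply CV_radius_inside. unfold e, d.
    rewrite CV_radius_decr_1, CV_radius_Int, CV_radius_decr_1. apply ca_rad; auto. }
  assert (Hd : ex_pseries d x) by (apply CV_radius_inside, rad_d; auto).
  assert (Ha : ex_pseries (ca lam) x) by (apply CV_radius_inside, ca_rad; auto).
  rewrite <- (PSeries_scal (1 / (1 + lam)) e), <- (PSeries_scal (lam / (1 + lam) ^ 2) d),
    <- (PSeries_scal ((lam / (1 + lam)) ^ 2) (ca lam)).
  rewrite <- PSeries_plus.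
  2, 3: apply ex_pseries_scal; auto; unfold mult; simpl; ring.
  rewrite <- PSeries_plus.
  2: apply ex_pseries_plus; apply ex_pseries_scal; auto; unfold mult; simpl; ring.
  2: apply ex_pseries_scal; auto; unfold mult; simpl; ring.
  unfold deg_polyexp, PSeries. apply Series_ext. intros n.
  unfold PS_plus, PS_scal, e, d, PS_decr_1, PS_Int. unfold plus, scal; simpl. unfold mult; simpl.
  rewrite ca_S. unfold ca.
  assert (0 < INR (S n)) by (apply lt_0_INR; lia).
  pose proof (fact_pos n).
  rewrite S_INR in *. change (match n with | 0%nat => 1 | S _ => INR n + 1 end) with (INR (S n)). rewrite S_INR. field. repeat split; lra.
Qed.
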